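(* Define sequences of primes as follows. For a prime $a$, let $S(a)=(s(1),s(2),\dots)$ be the sequence with $s(1)=a$ and, for $j\ge 2$, $s(j)$ the largest prime less than $2s(j-1)$. Put $p^{(1)}=2$ and $B_1=S(2)$; inductively, for $k\ge 2$, let $p^{(k)}$ be the smallest prime not belonging to $B_1\cup\dots\cup B_{k-1}$, and put $B_k=S(p^{(k)})$. Call a prime $p$ an RPR-prime if, with $q$ the smallest prime greater than $p/2$, the open interval $(p,2q)$ contains a prime; let $(RPR)_n$ denote the $n$-th RPR-prime in increasing order. Then for every $n\ge 1$, $p^{(n)}=(RPR)_n$.
   Context: Equivalently (for odd $p=p_n$, $p_k$ the $k$-th prime), $p$ is an RPR-prime iff all integers $\frac{p+1}{2},\frac{p+3}{2},\dots,\frac{p_{n+1}-1}{2}$ are composite. The first RPR-primes are $2,11,17,29,41,47,59,67,71,97,101,107,109,127,\dots$. *)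

(* Defs.v *)
From mathcomp Require Import all_boot.
Set Implicit Arguments. Unset Strict Implicit. Unset Printing Implicit Defensive.

(* largest prime strictly less than m (0 if there is none; for m >= 3 one exists) *)
Definition prev_prime (m : nat) : nat := \max_(i < m | prime i) i.

(* S(a) = (s(1), s(2), ...) with 0-based index: seqS a j = s(j+1).
   s(1) = a, s(j) = largest prime < 2 s(j-1). *)
Fixpoint seqS (a j : nat) : nat :=
  if j is j'.+1 then prev_prime (2 * seqS a j') else a.

Definition inS (a q : nat) : Prop := exists j, seqS a j = q.

(* Specification of the sequence p^(1), p^(2), ... (indices k >= 1; P 0 unused):
   p^(1) = 2, and for k >= 2, p^(k) is the smallest prime not in B_1 u ... u B_{k-1},
   where B_i = S(p^(i)). *)
Definition pseq_spec (P : nat -> nat) : Prop :=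
  P 1 = 2 /\
  forall k, 2 <= k ->
    [/\ prime (P k),
        (forall i, 1 <= i < k -> ~ inS (P i) (P k)) &
        (forall q, prime q -> q < P k -> exists2 i, 1 <= i < k & inS (P i) q)].

Lemma half_prime_ex (p : nat) : exists q, prime q && (p < 2 * q).
Proof.
case: (prime_above p) => q ltpq pq; exists q; rewrite pq /=.
by apply: (leq_trans ltpq); rewrite mul2n -addnn leq_addr.
Qed.

Definition half_prime (p : nat) : nat := ex_minn (half_prime_ex p).

Definition rpr (p : nat) : bool :=
  prime p && [exists r : 'I_(2 * half_prime p), prime r && (p < r)].

Definition nth_rpr (n p : nat) : bool :=
  rpr p && (count rpr (iota 0 p) == n.-1).

(* Main.v *)
Require Import Defs.
From mathcomp Require Import all_boot.
From mathcomp Require Import zify.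
Set Implicit Arguments. Unset Strict Implicit. Unset Printing Implicit Defensive.

Lemma sum_sub_le (m M : nat) (a b : nat -> nat) :
  (forall k, b k <= a k) ->
  \sum_(m <= k < M) a k = \sum_(m <= k < M) (a k - b k) + \sum_(m <= k < M) b k.
Proof.
move=> H; rewrite -big_split /=; apply: eq_bigr => k _; by rewrite subnK.
Qed.

Lemma divD_le a b d : a %/ d + b %/ d <= (a + b) %/ d.
Proof.
case: d => [|d]; first by rewrite !divn0.
by rewrite divnD // leq_addr.
Qed.

Lemma logC n p : prime p -> 0 < n ->
  logn p 'C(n.*2, n) = \sum_(1 <= k < n.*2.+1) (n.*2 %/ p ^ k - 2 * (n %/ p ^ k)).
Proof.
move=> pp n0.
have hf := bin_fact (leq_addr n n : n <= n + n).
rewrite -addnn.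
have: logn p (n + n)`! = logn p 'C(n + n, n) + (logn p n`! + logn p n`!).
  rewrite -hf addnK lognM ?bin_gt0 ?leq_addr // ?muln_gt0 ?fact_gt0 //.
  by rewrite lognM ?fact_gt0.
rewrite !logn_fact // => E.
have E2 : \sum_(1 <= k < n.+1) n %/ p ^ k = \sum_(1 <= k < (n+n).+1) n %/ p ^ k.
  rewrite [RHS](big_cat_nat (n:=n.+1)) //= ?ltnS ?leq_addr //.
  rewrite [X in _ = _ + X]big1_seq ?addn0 // => k /andP[_]; rewrite mem_index_iota => /andP[hk _].
  apply: divn_small; apply: (leq_trans (ltn_expl n (prime_gt1 pp))).
  by rewrite leq_exp2l ?prime_gt1 // ltnW.
rewrite E2 in E.
have E3 := @sum_sub_le 1 (n+n).+1 (fun k => (n+n) %/ p ^ k) (fun k => 2 * (n %/ p ^ k)).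
rewrite E3 /= in E; last by move=> k; rewrite mul2n -addnn divD_le.
have E4 : \sum_(1 <= k < (n+n).+1) 2 * (n %/ p ^ k) =
   \sum_(1 <= k < (n+n).+1) n %/ p ^ k + \sum_(1 <= k < (n+n).+1) n %/ p ^ k.
  by rewrite -big_split /=; apply: eq_bigr => k _; rewrite mul2n addnn.
rewrite E4 in E.
lia.
Qed.

Lemma term_le1 n d : n.*2 %/ d - 2 * (n %/ d) <= 1.
Proof.
case: d => [|d]; first by rewrite !divn0.
rewrite -addnn divnD // mul2n -addnn; case: leqP => _; lia.
Qed.

Lemma term0 n d : n.*2 < d -> n.*2 %/ d - 2 * (n %/ d) = 0.
Proof.
move=> h; rewrite divn_small //; lia.
Qed.

Lemma logC_le n p : prime p -> 0 < n -> logn p 'C(n.*2, n) <= trunc_log p n.*2.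
Proof.
move=> pp n0; rewrite logC //.
set T := trunc_log p n.*2.
have p1 := prime_gt1 pp.
have hT : p ^ T <= n.*2 by apply: trunc_logP => //; lia.
have hT2 : T < n.*2.+1 by apply: (leq_ltn_trans (ltnW (ltn_expl T p1))); lia.
rewrite (big_cat_nat (n:=T.+1)) //=.
rewrite [X in _ + X <= _]big1_seq ?addn0; last first.
  move=> k /andP[_]; rewrite mem_index_iota => /andP[hk _]; apply: term0.
  apply: (leq_trans (trunc_log_ltn _ p1)); by rewrite leq_exp2l.
apply: (@leq_trans (\sum_(1 <= k < T.+1) 1)); first by apply: leq_sum => k _; exact: term_le1.
by rewrite sum_nat_const_nat muln1 subn1.
Qed.

Lemma pow_logC_le n p : prime p -> 0 < n -> p ^ logn p 'C(n.*2, n) <= n.*2.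
Proof.
move=> pp n0; have p1 := prime_gt1 pp.
apply: (leq_trans _ (trunc_logP p1 _)); last by lia.
by rewrite leq_exp2l // logC_le.
Qed.

Lemma logC_big n p : prime p -> 0 < n -> n.*2 < p * p ->
  logn p 'C(n.*2, n) = n.*2 %/ p - 2 * (n %/ p).
Proof.
move=> pp n0 h; rewrite logC //.
rewrite (big_cat_nat (n:=2)) //=; last by lia.
rewrite big_nat1 expn1 [X in _ + X]big1_seq ?addn0 //.
move=> k /andP[_]; rewrite mem_index_iota => /andP[hk _]; apply: term0.
apply: (leq_trans h); rewrite (_ : p * p = p ^ 2); last by rewrite expnS expn1.
 by rewrite leq_exp2l ?(prime_gt1 pp).
Qed.

Lemma centC_rec n : n.+1 * 'C(n.+1.*2, n.+1) = 2 * n.*2.+1 * 'C(n.*2, n).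
Proof.
have h1 := mul_bin_diag (n.*2.+2) n.
have h2 := mul_bin_down (n.*2.+1) n.
rewrite /= in h1 h2.
have e : n.+1.*2 = n.*2.+2 by rewrite doubleS.
rewrite e.
rewrite (_ : n.*2.+1 - n = n.+1) in h2; last by lia.
move: h1 h2; set a := 'C(_.+2, _); set b := 'C(_.+1, n); set c := 'C(_, n).
rewrite -!addnn; lia.
Qed.

Lemma centC_lb n : 4 ^ n <= n.*2.+1 * 'C(n.*2, n).
Proof.
elim: n => [|n IH]; first by [].
have h := centC_rec n.
rewrite -(leq_pmul2l (ltn0Sn n)) mulnCA h expnS.
set c := 'C(n.*2, n) in h IH *; set x := 4 ^ n in IH *.
have e : n.+1.*2.+1 = n.*2.+3 by rewrite doubleS.
rewrite e.
nia.
Qed.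

Lemma centC_ub n : 0 < n -> 2 * 'C(n.*2, n) <= 4 ^ n.
Proof.
elim: n => [//|n IH] _.
case: n IH => [|n] IH; first by [].
have h := centC_rec n.+1; have {}IH := IH isT.
rewrite expnS.
have : n.+2 * (2 * 'C(n.+2.*2, n.+2)) <= n.+2 * (4 * 4 ^ n.+1).
  rewrite mulnCA h.
  set c := 'C(_, _) in IH h *; set x := 4 ^ _ in IH *. rewrite -!addnn; nia.
by rewrite leq_pmul2l.
Qed.

Lemma oddC_ub k : 'C(k.*2.+1, k.+1) <= 4 ^ k.
Proof.
have h := centC_ub (ltn0Sn k).
have e1 : 'C(k.+1.*2, k.+1) = 'C(k.*2.+1, k.+1) + 'C(k.*2.+1, k).
  by rewrite doubleS binS.
have e2 : 'C(k.*2.+1, k) = 'C(k.*2.+1, k.+1).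
  rewrite -(bin_sub (_ : k.+1 <= k.*2.+1)); last by lia.
  by rewrite (_ : k.*2.+1 - k.+1 = k) //; lia.
rewrite e1 e2 expnS in h; lia.
Qed.

Definition prim m := \prod_(0 <= i < m.+1 | prime i) i.

Lemma notdvd_fact p k : prime p -> k < p -> ~~ (p %| k`!).
Proof.
move=> pp kp; apply/negP => hd.
have : 1 <= logn p k`! by rewrite -(pfactor_dvdn 1 pp (fact_gt0 k)) expn1.
rewrite logn_fact // big1_seq // => j /andP[_]; rewrite mem_index_iota => /andP[hj _].
apply: divn_small; apply: (leq_trans kp).
by rewrite -{1}(expn1 p) leq_exp2l ?prime_gt1.
Qed.

Lemma Q_dvd k : \prod_(k.+2 <= i < k.*2.+2 | prime i) i %| 'C(k.*2.+1, k.+1).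
Proof.
have hb := bin_fact (_ : k.+1 <= k.*2.+1).
have hs := fact_split (_ : k.+1 <= k.*2.+1).
rewrite (_ : k.*2.+1 - k.+1 = k) in hb; last by lia.
have hr : \prod_(k.+2 <= i < k.*2.+2) i = 'C(k.*2.+1, k.+1) * k`!.
  have := hb _; rewrite hs ?mulnA => [e|]; last by lia.
  apply/eqP; rewrite -(eqn_pmul2l (fact_gt0 k.+1)); apply/eqP.
  by rewrite -e; lia.
have hQ : \prod_(k.+2 <= i < k.*2.+2 | prime i) i %| \prod_(k.+2 <= i < k.*2.+2) i.
  by rewrite [X in _ %| X](bigID prime) /= dvdn_mulr.
rewrite hr in hQ.
rewrite -(Gauss_dvdl _ (_ : coprime _ k`!)) //.
rewrite big_seq_cond; apply: (big_ind (fun x => coprime x k`!)); first exact: coprime1n.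
  by move=> x y; rewrite coprimeMl => -> ->.
move=> i /andP[]; rewrite mem_index_iota => /andP[h1 _] pi.
by rewrite prime_coprime // notdvd_fact //; lia.
Qed.

Lemma prim_S m : prim m.+1 = prim m * (if prime m.+1 then m.+1 else 1).
Proof. by rewrite /prim big_mkcond big_nat_recr //= -big_mkcond. Qed.

Lemma prim_odd k : prim k.*2.+1 = prim k.+1 * \prod_(k.+2 <= i < k.*2.+2 | prime i) i.
Proof. by rewrite /prim (big_cat_nat (n:=k.+2)) //=; lia. Qed.

Lemma prim_ub m : prim m <= 4 ^ m.
Proof.
elim/ltn_ind: m => m IH.
case: m IH => [|[|[|m]]] IH; try by rewrite /prim unlock.
case/boolP: (odd m) => om.
- rewrite prim_S ifF ?muln1; last first.
    apply/negP => pm; case: (even_prime pm) => //=; by rewrite om.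
  apply: (leq_trans (IH _ (ltnSn _))); by rewrite leq_exp2l.
- have e := odd_double_half m; rewrite (negbTE om) add0n in e.
  set k := (m./2).+1.
  have hm : m.+3 = k.*2.+1 by rewrite /k -!addnn in e *; lia.
  rewrite hm.
  have k1 : 1 <= k by rewrite /k; lia.
  rewrite prim_odd.
  have h1 : prim k.+1 <= 4 ^ k.+1 by apply: IH; rewrite hm; lia.
  have h2 : \prod_(k.+2 <= i < k.*2.+2 | prime i) i <= 4 ^ k.
    apply: leq_trans (oddC_ub k); apply: dvdn_leq; last exact: Q_dvd.
    by rewrite bin_gt0; lia.
  apply: (leq_trans (leq_mul h1 h2)); rewrite -expnD (_ : k.+1 + k = k.*2.+1) //; lia.
Qed.

Lemma decomp_ext m N : 0 < m -> m < N -> m = \prod_(0 <= p < N) p ^ logn p m.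
Proof.
move=> m0 mN.
rewrite -{1}(partnT m0) /partn.
rewrite [RHS](big_cat_nat (n:=m.+1)) //= [X in _ = _ * X]big1_seq ?muln1.
  by apply: eq_bigl.
move=> p /andP[_]; rewrite mem_index_iota => /andP[h _].
by rewrite ltn_log0.
Qed.

Lemma count_le_min M t : \sum_(0 <= p < M | p < t) 1 <= minn M t.
Proof.
elim: M => [|M IH]; first by rewrite big_geq.
rewrite big_mkcond big_nat_recr //= -big_mkcond.
move: IH; set S := \sum_(0 <= p < M | p < t) 1 => IH.
change (S + (if M < t then 1 else 0) <= minn M.+1 t).
case: ifP => h; lia.
Qed.

Lemma prod_cond_const M (P : pred nat) c : \prod_(0 <= p < M | P p) c = c ^ (\sum_(0 <= p < M | P p) 1).
Proof. by rewrite expn_sum; apply: eq_bigr => i _; rewrite expn1. Qed.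

Lemma div_eq_q q p r : 0 < p -> r < p -> (q * p + r) %/ p = q.
Proof. by move=> p0 rp; rewrite divnMDl // divn_small // addn0. Qed.

Lemma term_bound n s p : 0 < n -> n.*2 < s.+1 * s.+1 ->
  p ^ logn p 'C(n.*2, n) <=
  (if p <= s then n.*2 else 1) * (if prime p && (p <= n.*2 %/ 3) then p else 1) *
  (if prime p && (n < p) && (p <= n.*2) then n.*2 else 1).
Proof.
move=> n0 hs.
have g1 : 0 < (if p <= s then n.*2 else 1) by case: ifP => _; lia.
case pp: (prime p); last first.
  rewrite lognE pp /= expn0 /= !muln1.
  exact: g1.
have p1 := prime_gt1 pp.
have g2 : 0 < (if true && (p <= n.*2 %/ 3) then p else 1) by case: ifP => _; lia.
have g3 : 0 < (if true && (n < p) && (p <= n.*2) then n.*2 else 1) by case: ifP => _; lia.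
case: (leqP p s) => hps.
  apply: (leq_trans (pow_logC_le pp n0)).
  rewrite -mulnA; apply: leq_pmulr; by rewrite muln_gt0 g2 g3.
have hpp : n.*2 < p * p by apply: (leq_trans hs); apply: leq_mul.
rewrite logC_big //.
have e1 := term_le1 n p.
set e := _ - _ in e1 *.
have pe : p ^ e <= p by case: e e1 => [|[|]] //= _; rewrite ?expn0 ?expn1 //; lia.
rewrite mul1n.
case: ifP => h3.
  apply: (leq_trans pe); by apply: leq_pmulr.
rewrite mul1n.
case: (leqP p n) => hpn /=.
  have : e = 0.
    move: h3; rewrite leq_divRL // => /negbT; rewrite -ltnNge => h3.
    rewrite /e (_ : n = 1 * p + (n - p)); last by lia.
    rewrite (_ : (1 * p + (n - p)).*2 = 2 * p + (n.*2 - p.*2)); last by lia.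
    rewrite !div_eq_q //; lia.
  by move=> ez; rewrite ez expn0.
case: ifP => h4.
  by apply: (leq_trans pe).
have : e = 0 by rewrite /e !divn_small //; lia.
by move=> ez; rewrite ez expn0.
Qed.

Definition pc n := \sum_(n.+1 <= i < n.*2.+1 | prime i) 1.

Lemma erdos n s : 0 < n -> n.*2 < s.+1 * s.+1 ->
  4 ^ n <= n.*2.+1 * ((n.*2) ^ s.+1 * 4 ^ (n.*2 %/ 3) * (n.*2) ^ pc n).
Proof.
move=> n0 hs.
apply: (leq_trans (centC_lb n)); rewrite leq_pmul2l //.
set C := 'C(n.*2, n).
have C0 : 0 < C by rewrite bin_gt0; lia.
set N := C + n.*2 + 1.
rewrite [X in X <= _](decomp_ext C0 (_ : C < N)); last by rewrite /N; lia.
apply: (leq_trans (leq_prod (fun p _ => term_bound p n0 hs))).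
rewrite !big_split /=.
rewrite -!big_mkcond /=.
apply: leq_mul; first apply: leq_mul.
- rewrite prod_cond_const; apply: leq_pexp2l; first lia.
  apply: leq_trans (count_le_min N s.+1) _; exact: geq_minr.
- set T := n.*2 %/ 3.
  have hT : T < N by rewrite /T /N; have := leq_div n.*2 3; lia.
  rewrite (big_cat_nat (n:=T.+1)) //= [X in _ * X <= _]big1_seq ?muln1.
    apply: leq_trans (prim_ub T); rewrite /prim big_nat_cond [X in _ <= X]big_nat_cond.
    apply: eq_leq; apply: eq_bigl => i. Show.
    by case: (boolP (i < T.+1)) => h; rewrite /= ?h ?andbT ?andbF //; case: (prime i) => //; lia.
  move=> i /andP[/andP[_ h]]; rewrite mem_index_iota => /andP[h2 _]; lia.
- rewrite prod_cond_const; apply: leq_pexp2l; first lia.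
  apply: eq_leq; rewrite /pc.
  rewrite (big_cat_nat (n:=n.+1)) //=; last by rewrite /N; lia.
  rewrite (big_cat_nat (n:=n.*2.+1) (m:=n.+1)) //=; try by rewrite /N; lia.
  rewrite [X in X + _]big1_seq ?add0n; last first.
    move=> i /andP[/andP[/andP[_ h]] _]; rewrite mem_index_iota => /andP[_ h2]; lia.
  rewrite [X in _ + X]big1_seq ?addn0; last first.
    move=> i /andP[/andP[_ h] ]; rewrite mem_index_iota => /andP[h2 _]; lia.
  rewrite big_nat_cond [RHS]big_nat_cond; apply: eq_bigl => i.
  case: (boolP (n.+1 <= i < n.*2.+1)) => h //=.
  case: (prime i) => //=; lia.
Qed.

Lemma exp_mono a b e : a <= b -> a ^ e <= b ^ e.
Proof. move=> h; elim: e => // e IH; rewrite !expnS; exact: leq_mul. Qed.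

Lemma pow_big L : 14 <= L -> 49 * (L.+1 * L.+1) + 1 <= 2 ^ L.
Proof.
elim: L => // L IH hL.
case: (ltngtP 14 L.+1) => h.
- have {}IH := IH h. rewrite expnS. nia.
- lia.
- by rewrite -h.
Qed.

Lemma sqrt_ex x : exists s, x < s.+1 * s.+1.
Proof. exists x; nia. Qed.

Lemma many_primes K n : 128 * 64 <= n -> (K + 2) * (K + 2) <= n.*2 -> K < pc n.
Proof.
move=> hn hK; rewrite ltnNge; apply/negP => hk.
set x := n.*2.
case: (ex_minnP (sqrt_ex x)) => s hs smin.
have ss : s * s <= x.
  case: s hs smin => [|s'] hs smin; first by [].
  by rewrite leqNgt; apply/negP => h; have := smin _ h; lia.
set L := (trunc_log 2 x.+1).+1.
have hL1 : x.+1 < 2 ^ L by apply: trunc_log_ltn.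
have hL2 : 2 ^ L.-1 <= x.+1 by apply: trunc_logP.
have hL3 : 14 <= L.-1.
  apply: trunc_log_max => //; rewrite /x (_ : 2 ^ 14 = 128 * 128) //; lia.
clearbody L.
have hL4 := pow_big hL3; rewrite (_ : L.-1.+1 = L) in hL4; last by lia.
have hLx : 49 * (L * L) <= x by lia.
have h7 : 7 * L <= s.
  rewrite leqNgt; apply/negP => h; have : s.+1 * s.+1 <= (7 * L) * (7 * L) by nia.
  lia.
have hKs : K + 2 <= s.
  rewrite leqNgt; apply/negP => h; have : s.+1 * s.+1 <= (K + 2) * (K + 2) by nia.
  lia.
have n0 : 0 < n by lia.
have he := erdos n0 hs.
set T := n.*2 %/ 3 in he.
have hT : 3 * T <= x by rewrite /T /x; have := leq_div n.*2 3; lia.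
have : 2 ^ (n.*2) <= 2 ^ (L + L * s.+1 + T.*2 + L * pc n).
  rewrite -mul2n expnM (_ : 2 ^ 2 = 4) //; apply: (leq_trans he).
  rewrite !expnD -!mulnA; apply: leq_mul; first by rewrite /x in hL1; lia.
  apply: leq_mul.
    rewrite expnM; apply: exp_mono; rewrite /x in hL1; lia.
  apply: leq_mul; first by rewrite -mul2n expnM.
  rewrite expnM; apply: exp_mono; rewrite /x in hL1; lia.
rewrite leq_exp2l // -/x => hx.
have hpc : L * pc n <= L * K by apply: leq_mul.
nia.
Qed.

Lemma sum_pos_ex m M (P : pred nat) : 0 < \sum_(m <= i < M | P i) 1 ->
  exists2 i, m <= i < M & P i.
Proof.
case: (boolP (has P (index_iota m M))) => [/hasP [i hi pi] _ | /hasPn hn].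
  by exists i => //; rewrite -mem_index_iota.
rewrite big_seq_cond big1 // => i /andP[hi pi].
by have := hn i hi; rewrite pi.
Qed.

Lemma chain_bert a c : path (fun a b => (a < b) && (b <= a.*2)) a c ->
  forall n, a <= n < last a c -> exists2 p, p \in c & n < p <= n.*2.
Proof.
elim: c a => [|b c IH] a /=; first by move=> _ n; lia.
move=> /andP[/andP[ab b2a] hp] n /andP[an nl].
case: (ltnP n b) => hnb.
  exists b; first exact: mem_head.
  by rewrite hnb; lia.
have hb : b <= n < last b c by rewrite hnb.
have [p pc hp2] := IH b hp n hb.
by exists p => //; rewrite in_cons pc orbT.
Qed.

Definition bchain := [:: 3;5;7;13;23;43;83;163;317;631;1259;2503;5003;9973].

Lemma bchain_prime : all prime bchain. Proof. by vm_compute. Qed.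
Lemma bchain_path : path (fun a b => (a < b) && (b <= a.*2)) 2 bchain.
Proof. by vm_compute. Qed.
Lemma bchain_last : last 2 bchain = 9973. Proof. by []. Qed.

Lemma bertrand n : 0 < n -> exists2 p, prime p & n < p <= n.*2.
Proof.
move=> n0.
case: (leqP (128 * 64) n) => hn.
  have h4 : (0 + 2) * (0 + 2) <= n.*2 by lia.
  have := many_primes hn h4; rewrite /pc => h.
  have [p /andP[h1 h2] pp] := sum_pos_ex h.
  by exists p => //; lia.
case: (ltnP n 2) => h2.
  by exists 2 => //; lia.
have hr : 2 <= n < last 2 bchain.
  rewrite bchain_last; apply/andP; split; first lia.
  apply: (leq_trans hn); by vm_compute.
have [p pc hp] := chain_bert bchain_path hr.
by exists p => //; move/allP: bchain_prime; apply.
Qed.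

Lemma pp_spec m r : prime r -> r < m ->
  [/\ prime (prev_prime m), prev_prime m < m &
      forall q, prime q -> q < m -> q <= prev_prime m].
Proof.
move=> pr rm; rewrite /prev_prime (bigmax_eq_arg (Ordinal rm)) //.
case: arg_maxnP => //= i pi maxi; split => //.
move=> q pq qm; exact: (maxi (Ordinal qm)).
Qed.

Definition f s := prev_prime (2 * s).

Lemma f_spec s : prime s ->
  [/\ prime (f s), s <= f s, f s < 2 * s & forall q, prime q -> q < 2 * s -> q <= f s].
Proof.
move=> ps; have s1 := prime_gt1 ps.
have s2 : s < 2 * s by lia.
have [h1 h2 h3] := pp_spec ps s2.
split => //; exact: h3.
Qed.

Lemma seqS_S a j : seqS a j.+1 = f (seqS a j).
Proof. by []. Qed.

Lemma seqS_prime a j : prime a -> prime (seqS a j).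
Proof.
move=> pa; elim: j => // j IH; rewrite seqS_S.
by have [] := f_spec IH.
Qed.

Lemma seqS_ge a j : prime a -> a <= seqS a j.
Proof.
move=> pa; elim: j => // j IH; rewrite seqS_S.
have [_ h _ _] := f_spec (seqS_prime j pa); lia.
Qed.

Lemma seqS_add a j k : seqS a (j + k) = seqS (seqS a j) k.
Proof. by elim: k => [|k IH]; rewrite ?addn0 // addnS /= IH. Qed.

Lemma inS_trans a b c : inS a b -> inS b c -> inS a c.
Proof. by move=> [j <-] [k <-]; exists (j + k); rewrite seqS_add. Qed.

Lemma inS_refl a : inS a a.
Proof. by exists 0. Qed.

Lemma inS_ge a q : prime a -> inS a q -> a <= q.
Proof. by move=> pa [j <-]; exact: seqS_ge. Qed.

Lemma inS_prime a q : prime a -> inS a q -> prime q.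
Proof. by move=> pa [j <-]; exact: seqS_prime. Qed.

Lemma hp_spec p : [/\ prime (half_prime p), p < 2 * half_prime p &
  forall q, prime q -> p < 2 * q -> half_prime p <= q].
Proof.
rewrite /half_prime; case: ex_minnP => h /andP[ph ph2] hmin.
split => // q pq pq2; apply: hmin; by rewrite pq pq2.
Qed.

Lemma rprP p : reflect (prime p /\ exists2 r, prime r & p < r < 2 * half_prime p) (rpr p).
Proof.
rewrite /rpr; apply: (iffP andP) => [[pp /existsP[r /andP[pr hr]]] | [pp [r pr /andP[h1 h2]]]].
  split => //; exists r => //; rewrite hr; exact: ltn_ord.
split => //; apply/existsP; exists (Ordinal h2); by rewrite /= pr h1.
Qed.

Lemma rpr_not_f s : prime s -> ~~ rpr (f s).
Proof.
move=> ps; apply/negP => /rprP [pf [r pr /andP[h1 h2]]].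
have [_ _ hf hmax] := f_spec ps.
have [_ _ hmin] := hp_spec (f s).
have := hmin s ps hf.
have := hmax r pr.
lia.
Qed.

Lemma rpr_inS r a : rpr r -> prime a -> inS a r -> r = a.
Proof.
move=> hr pa [[|j] hj]; first by rewrite -hj.
rewrite seqS_S in hj.
by have := rpr_not_f (seqS_prime j pa); rewrite hj hr.
Qed.

Lemma rpr2 : rpr 2.
Proof.
have [ph h2 hmin] := hp_spec 2.
have e : half_prime 2 = 2.
  by apply/eqP; rewrite eqn_leq hmin // (prime_gt1 ph).
apply/rprP; split => //; exists 3 => //; by rewrite e.
Qed.

Lemma cover q : prime q -> exists2 a, rpr a & (a <= q /\ inS a q).
Proof.
elim/ltn_ind: q => q IH pq.
case: (boolP (rpr q)) => hq.
  by exists q => //; split => //; exact: inS_refl.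
have [ph qh hmin] := hp_spec q.
set h := half_prime q in ph qh hmin.
have q2 : q != 2 by apply/negP => /eqP e; move: hq; rewrite e rpr2.
have oq : odd q by case: (even_prime pq) => // e; move: q2; rewrite e.
have eq2 := odd_double_half q; rewrite oq in eq2.
have q1 := prime_gt1 pq.
have q20 : 0 < q./2 by rewrite -!addnn in eq2 *; lia.
have [p pp /andP[hp1 hp2]] := bertrand q20.
have hhp : h <= p by apply: hmin => //; rewrite -!addnn in eq2 hp1; lia.
have hhq : h < q by rewrite -!addnn in eq2 hp2; lia.
have [pf hle hlt hmax] := f_spec ph.
have hfq : f h = q.
  apply/eqP; rewrite eqn_leq hmax // andbT leqNgt; apply/negP => hgt.
  move/rprP: hq; case; split => //; exists (f h) => //; by rewrite hgt.
have [a ra [ha1 ha2]] := IH h hhq ph.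
exists a => //; split; first lia.
apply: (inS_trans ha2); exists 1; by rewrite seqS_S.
Qed.

Lemma index_iota_cat a b c : a <= b -> b <= c ->
  index_iota a c = index_iota a b ++ index_iota b c.
Proof.
move=> ab bc; rewrite /index_iota.
have e : c - a = (b - a) + (c - b) by lia.
by rewrite e iotaD (_ : a + (b - a) = b) //; lia.
Qed.

Lemma hp_mono p1 p2 : prime p1 -> ~~ rpr p1 -> prime p2 -> p1 < p2 ->
  half_prime p1 < half_prime p2.
Proof.
move=> pp1 nr pp2 lt.
have [ph2 h2 _] := hp_spec p2.
have [ph1 h1 min1] := hp_spec p1.
have h12 : p1 < 2 * half_prime p2 by lia.
have le := min1 _ ph2 h12.
rewrite ltn_neqAle le andbT; apply/negP => /eqP e.
move/rprP: nr; case; split => //; exists p2 => //; rewrite lt /= e; lia.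
Qed.

Lemma inf_rpr N : exists p, rpr p && (N < p).
Proof.
set n := 128 * 64 + (N + 4) * (N + 4) + N.
case: (boolP (has (fun p => rpr p && (N < p)) (iota 0 n.*2.+1))).
  by case/hasP => p _ h; exists p.
move/hasPn => hn.
have nr : forall p, prime p -> N < p -> p <= n.*2 -> ~~ rpr p.
  move=> p pp h1 h2.
  have hm : p \in iota 0 n.*2.+1 by rewrite mem_iota add0n ltnS h2.
  by have := hn p hm; rewrite h1 andbT.
set A := [seq p <- index_iota N.+1 n.*2.+1 | prime p].
have p2 : prime 2 by [].
have n2 : 2 < n.*2.+1 by rewrite /n; lia.
have [pmp pml pmmax] := pp_spec p2 n2.
set pm := prev_prime n.*2.+1 in pmp pml pmmax.
set B := [seq q <- index_iota 0 n.+1 | prime q && (N < 2 * q)].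
have sub : {subset [seq half_prime p | p <- A] <= half_prime pm :: B}.
  move=> y /mapP[p]; rewrite mem_filter mem_index_iota => /andP[pp /andP[h1 h2]] ->.
  have hp := pmmax p pp h2.
  rewrite in_cons; case: (ltngtP p pm) hp => // hlt _; last by rewrite hlt eqxx.
  have [ph hph _] := hp_spec p.
  apply/orP; right; rewrite mem_filter mem_index_iota ph /=.
  have : pm >= 2 * half_prime p.
    rewrite leqNgt; apply/negP => hh.
    have hp2 : p <= n.*2 by lia.
    have := nr p pp h1 hp2.
    by move/rprP; case; split => //; exists pm => //; rewrite hlt.
  lia.
have un : uniq [seq half_prime p | p <- A].
  rewrite map_inj_in_uniq ?filter_uniq ?iota_uniq //.
  move=> x y; rewrite !mem_filter !mem_index_iota => /andP[px /andP[x1 x2]] /andP[py /andP[y1 y2]] e.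
  case: (ltngtP x y) => // h.
    have hx2 : x <= n.*2 by lia.
    by have := hp_mono px (nr x px x1 hx2) py h; rewrite e ltnn.
  have hy2 : y <= n.*2 by lia.
  by have := hp_mono py (nr y py y1 hy2) px h; rewrite e ltnn.
have hsz := uniq_leq_size un sub.
rewrite size_map /= /A /B !size_filter in hsz.
have nN : N <= n by rewrite /n; lia.
have e1 : index_iota N.+1 n.*2.+1 = index_iota N.+1 n.+1 ++ index_iota n.+1 n.*2.+1.
  apply: index_iota_cat; lia.
have e2 : index_iota 0 n.+1 = index_iota 0 N.+1 ++ index_iota N.+1 n.+1.
  apply: index_iota_cat; lia.
rewrite e1 e2 in hsz.
rewrite !count_cat in hsz.
have c1 := count_size (fun q => prime q && (N < 2 * q)) (index_iota 0 N.+1).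
have c2 : count (fun q => prime q && (N < 2 * q)) (index_iota N.+1 n.+1) <=
          count prime (index_iota N.+1 n.+1).
  by apply: sub_count => q /andP[].
rewrite size_iota subn0 in c1.
have hpc : pc n <= N + 2.
  rewrite /pc sum1_count.
  have {}hsz : (count prime (index_iota N.+1 n.+1) + count prime (index_iota n.+1 n.*2.+1) <=
    (count (fun q : nat => prime q && (N < 2 * q)) (index_iota 0 N.+1) +
     count (fun q : nat => prime q && (N < 2 * q)) (index_iota N.+1 n.+1)).+1) := hsz.
  lia.
have hn1 : 128 * 64 <= n by rewrite /n; lia.
have hn2 : (N + 2 + 2) * (N + 2 + 2) <= n.*2 by rewrite /n; lia.
have := many_primes hn1 hn2.
lia.
Qed.

Definition nextR x := ex_minn (inf_rpr x).

Lemma nR_spec x : [/\ rpr (nextR x), x < nextR x & forall p, rpr p -> x < p -> nextR x <= p].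
Proof.
rewrite /nextR; case: ex_minnP => m /andP[h1 h2] hmin; split => // p hp hxp.
by apply: hmin; rewrite hp hxp.
Qed.

Fixpoint Pn k := if k is k'.+1 then nextR (Pn k') else 0.

Lemma rpr_prime p : rpr p -> prime p.
Proof. by case/andP. Qed.

Lemma Pn_rpr k : 0 < k -> rpr (Pn k).
Proof. by case: k => // k _ /=; have [] := nR_spec (Pn k). Qed.

Lemma Pn_lt k : Pn k < Pn k.+1.
Proof. by rewrite /=; have [] := nR_spec (Pn k). Qed.

Lemma Pn_mono i k : i < k -> Pn i < Pn k.
Proof.
elim: k => // k IH; rewrite ltnS leq_eqVlt => /orP[/eqP -> | h]; first exact: Pn_lt.
exact: ltn_trans (IH h) (Pn_lt k).
Qed.

Lemma Pn1 : Pn 1 = 2.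
Proof.
rewrite /=; have [h1 h2 h3] := nR_spec 0.
apply/eqP; rewrite eqn_leq h3 ?rpr2 //=.
exact: prime_gt1 (rpr_prime h1).
Qed.

Lemma Pn_enum k r : rpr r -> r < Pn k -> exists2 i, 0 < i < k & r = Pn i.
Proof.
move=> hr; elim: k => [|k IH] /=; first by [].
have [h1 h2 h3] := nR_spec (Pn k).
move=> hrk.
case: (ltngtP r (Pn k)) => h.
- by have [i /andP[i1 i2] ->] := IH h; exists i => //; rewrite i1 /= ltnS ltnW.
- by have := h3 r hr h; lia.
- move: h; case: (posnP k) => [k0 | kp] e.
    by move: hr; rewrite e k0 /= => /rpr_prime.
  by exists k => //; rewrite kp ltnSn.
Qed.

Lemma exP : exists P, pseq_spec P.
Proof.
exists Pn; split; first exact: Pn1.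
move=> k hk; split.
- exact: rpr_prime (Pn_rpr (ltnW hk)).
- move=> i /andP[i1 i2] hin.
  have := rpr_inS (Pn_rpr (ltnW hk)) (rpr_prime (Pn_rpr i1)) hin.
  by have := Pn_mono i2; lia.
- move=> q pq hq.
  have [a ra [ha1 ha2]] := cover pq.
  have hak : a < Pn k by lia.
  have [i hi ea] := Pn_enum ra hak.
  by exists i => //; rewrite -ea.
Qed.

Section Uniq.
Variable P : nat -> nat.
Hypothesis hP : pseq_spec P.

Lemma sP_prime k : 0 < k -> prime (P k).
Proof.
case: hP => h1 h2; case: k => // [[|k]] _; first by rewrite h1.
by have [] := h2 k.+2 isT.
Qed.

Lemma sP_rpr k : 0 < k -> rpr (P k).
Proof.
case: hP => h1 h2; case: k => // [[|k]] _; first by rewrite h1 rpr2.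
have [pk hb hc] := h2 k.+2 isT.
have [a ra [ha1 ha2]] := cover pk.
case: (ltngtP a (P k.+2)) ha1 => // hlt _; last by rewrite -hlt.
have [i hi hin] := hc a (rpr_prime ra) hlt.
by case: (hb i hi (inS_trans hin ha2)).
Qed.

Lemma sP_mono i k : 0 < i -> i < k -> P i < P k.
Proof.
case: hP => h1 h2 i0 ik.
have k2 : 2 <= k by lia.
have [pk hb hc] := h2 k k2.
case: (ltngtP (P i) (P k)) => // h.
- case: (posnP i.-1) => hi.
    have e : i = 1 by lia.
    have := prime_gt1 pk; move: h; rewrite e h1; lia.
  have i2 : 2 <= i by lia.
  have [pi hbi hci] := h2 i i2.
  have [j hj hin] := hci _ pk h.
  have hj2 : 0 < j < k by lia.
  by case: (hb j hj2 hin).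
- have hi2 : 0 < i < k by lia.
  by case: (hb i hi2); rewrite h; exact: inS_refl.
Qed.

Lemma sP_enum k r : 0 < k -> rpr r -> r < P k -> exists2 i, 0 < i < k & r = P i.
Proof.
case: hP => h1 h2 k0 hr hrk.
have pr := rpr_prime hr.
case: (posnP k.-1) => hk.
  have e : k = 1 by lia.
  by move: hrk; rewrite e h1; have := prime_gt1 pr; lia.
have k2 : 2 <= k by lia.
have [pk hb hc] := h2 k k2.
have [i hi hin] := hc r pr hrk.
exists i => //; apply: rpr_inS hr _ hin.
apply: sP_prime; lia.
Qed.

Lemma sP_count n : 0 < n -> count rpr (iota 0 (P n)) = n.-1.
Proof.
elim: n => // n IH _.
case: (posnP n) => [-> | n0].
  case: hP => h1 _; rewrite h1 /=.
  by rewrite /rpr.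
have hlt := sP_mono n0 (ltnSn n).
rewrite (_ : P n.+1 = P n + (P n.+1 - P n)); last by lia.
rewrite iotaD count_cat IH // add0n.
case e: (P n.+1 - P n) => [|m]; first by lia.
rewrite /= sP_rpr //.
have : count rpr (iota (P n).+1 m) = 0.
  apply/eqP; rewrite -leqn0 leqNgt -has_count; apply/hasPn => r.
  rewrite mem_iota => /andP[r1 r2]; apply/negP => hr.
  have hr2 : r < P n.+1 by lia.
  have [i /andP[i1 i2] ei] := sP_enum (ltn0Sn n) hr hr2.
  have : P i <= P n.
    case: (ltngtP i n) => hin; [exact: ltnW (sP_mono i1 hin) | lia | by rewrite hin].
  lia.
move=> ->; lia.
Qed.

End Uniq.

Theorem theorem1 :
  (exists P : nat -> nat, pseq_spec P) /\
  (forall P : nat -> nat, pseq_spec P -> forall n : nat, 1 <= n -> nth_rpr n (P n)).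
Proof.
split; first exact: exP.
move=> P hP n n1; by rewrite /nth_rpr sP_rpr // sP_count // eqxx.
Qed.
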